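(* Let $d = 10$. (i) If $n = 4(12m+5) + 4(6k+3)\sqrt{10}$ with $m, k \in \mathbb{Z}$, $m \equiv 0 \pmod 5$ and $k \equiv 2 \pmod 5$, then there exist infinitely many $D(n)$-quadruples in $\mathbb{Z}[\sqrt{10}]$. (ii) If $n = 4(12m+11) + 4(6k+3)\sqrt{10}$ with $m, k \in \mathbb{Z}$, $m \equiv 2 \pmod 5$ and $k \equiv 2 \pmod 5$, then there exist infinitely many $D(n)$-quadruples in $\mathbb{Z}[\sqrt{10}]$.
   Context: For $n \in \mathbb{Z}[\sqrt{d}]$, a set $\{a_1,a_2,a_3,a_4\}$ of four distinct non-zero elements of $\mathbb{Z}[\sqrt{d}]$ is called a $D(n)$-quadruple in $\mathbb{Z}[\sqrt{d}]$ if $a_ia_j + n$ is a square of an element of $\mathbb{Z}[\sqrt{d}]$ for all $1 \le i < j \le 4$. *)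

(* Defs.v *)
From Stdlib Require Import ZArith List.
Open Scope Z_scope.

(* Elements of Z[sqrt d] represented as pairs (x, y) meaning x + y*sqrt d. *)
Record Zsqrt := mkZs { re : Z; im : Z }.

Definition zs_add (a b : Zsqrt) : Zsqrt := mkZs (re a + re b) (im a + im b).
Definition zs_mul (d : Z) (a b : Zsqrt) : Zsqrt :=
  mkZs (re a * re b + d * im a * im b) (re a * im b + im a * re b).

Definition zs_zero : Zsqrt := mkZs 0 0.

Definition is_square (d : Z) (z : Zsqrt) : Prop := exists w, zs_mul d w w = z.

Definition D_quadruple (d : Z) (n : Zsqrt) (a1 a2 a3 a4 : Zsqrt) : Prop :=
  NoDup (a1 :: a2 :: a3 :: a4 :: nil) /\
  Forall (fun a => a <> zs_zero) (a1 :: a2 :: a3 :: a4 :: nil) /\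
  is_square d (zs_add (zs_mul d a1 a2) n) /\
  is_square d (zs_add (zs_mul d a1 a3) n) /\
  is_square d (zs_add (zs_mul d a1 a4) n) /\
  is_square d (zs_add (zs_mul d a2 a3) n) /\
  is_square d (zs_add (zs_mul d a2 a4) n) /\
  is_square d (zs_add (zs_mul d a3 a4) n).

(* A quadruple as a set: a list of its elements (order irrelevant via
   membership comparison). *)
Definition same_set (s t : list Zsqrt) : Prop := forall x, In x s <-> In x t.

(* There exist infinitely many D(n)-quadruples (as sets): no finite family of
   sets contains all of them. *)
Definition infinitely_many_D_quadruples (d : Z) (n : Zsqrt) : Prop :=
  forall F : list (list Zsqrt),
    exists a1 a2 a3 a4,
      D_quadruple d n a1 a2 a3 a4 /\
      forall s, In s F -> ~ same_set s (a1 :: a2 :: a3 :: a4 :: nil).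

(* Main.v *)
Require Import Defs.
From Stdlib Require Import ZArith List Lia Classical Wf_nat.
Import ListNotations.
Open Scope Z_scope.

Definition zm := zs_mul 10.
Definition zsc (c:Z) (x:Zsqrt) := mkZs (c * re x) (c * im x).
Definition zc (c:Z) := mkZs c 0.

Definition Xe L := zs_add (zsc 18 L) (zc 1).
Definition Ye L := zs_add (zsc 18 L) (zc 2).
Definition Ze L := zs_add (zsc 36 L) (zc 3).
Definition Ue L := zs_add (zc 1) (zsc 12 L).
Definition eB M L := zs_add (zm M (zm (Xe L) (Xe L))) (zsc 24 L).
Definition eC M L := zs_add (zm M (zm (Ye L) (Ye L))) (zs_add (zsc 24 L) (zc 4)).
Definition eD M L := zs_add (zm M (zm (Ze L) (Ze L))) (zsc 8 (Ue L)).
Definition nn M L := zs_add (zc 4) (zsc 4 (zm (Ue L) M)).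

Ltac zsolve := intros; repeat match goal with r := _ |- _ => subst r end; repeat match goal with
  | M : Zsqrt |- _ => destruct M end;
  unfold eB, eC, eD, nn, Xe, Ye, Ze, Ue, zm, zsc, zc, zs_add, zs_mul; cbn [re im];
  f_equal; ring.

Lemma sqAB M L : zm (zs_add (zm M (Xe L)) (zc 2)) (zs_add (zm M (Xe L)) (zc 2))
  = zs_add (zm M (eB M L)) (nn M L).
Proof. zsolve. Qed.
Lemma sqAC M L : zm (zs_add (zm M (Ye L)) (zc 2)) (zs_add (zm M (Ye L)) (zc 2))
  = zs_add (zm M (eC M L)) (nn M L).
Proof. zsolve. Qed.
Lemma sqAD M L : zm (zs_add (zm M (Ze L)) (zc 2)) (zs_add (zm M (Ze L)) (zc 2))
  = zs_add (zm M (eD M L)) (nn M L).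
Proof. zsolve. Qed.
Lemma sqBC M L :
  let r := zs_add (zm M (zm (Xe L) (Ye L))) (zsc 2 (Ue L)) in
  zm r r = zs_add (zm (eB M L) (eC M L)) (nn M L).
Proof. zsolve. Qed.
Lemma sqBD M L :
  let r := zs_add (zm M (zm (Xe L) (Ze L))) (zs_add (zsc 4 (Ue L)) (zc (-2))) in
  zm r r = zs_add (zm (eB M L) (eD M L)) (nn M L).
Proof. zsolve. Qed.
Lemma sqCD M L :
  let r := zs_add (zm M (zm (Ye L) (Ze L))) (zs_add (zsc 4 (Ue L)) (zc 2)) in
  zm r r = zs_add (zm (eC M L) (eD M L)) (nn M L).
Proof. zsolve. Qed.
Definition Tb M L := zs_add (zm M (zs_add (zsc 3 L) (zsc 27 (zm L L)))) (zsc 2 L).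
Definition Tc M L := zs_add (zm M (zs_add (zsc 6 L) (zsc 27 (zm L L)))) (zsc 2 L).
Definition Td M L := zs_add (zm M (zs_add (zsc 18 L) (zsc 108 (zm L L)))) (zsc 8 L).
Definition Wb M L := zs_add (zsc 3 M) (zs_add (zsc 27 (zm M L)) (zc 2)).

Ltac zsolve2 := intros; repeat match goal with
  | M : Zsqrt |- _ => destruct M end;
  unfold Tb, Tc, Td, Wb, eB, eC, eD, nn, Xe, Ye, Ze, Ue, zm, zsc, zc, zs_add, zs_mul; cbn [re im];
  f_equal; ring.

Lemma eB_form M L : eB M L = zs_add M (zsc 12 (Tb M L)). Proof. zsolve2. Qed.
Lemma eC_form M L : eC M L = zs_add (zsc 4 M) (zs_add (zc 4) (zsc 12 (Tc M L))). Proof. zsolve2. Qed.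
Lemma eD_form M L : eD M L = zs_add (zsc 9 M) (zs_add (zc 8) (zsc 12 (Td M L))). Proof. zsolve2. Qed.
Lemma Tb_form M L : Tb M L = zm L (Wb M L). Proof. zsolve2. Qed.
Lemma UM_form M L : zm (Ue L) M = zs_add M (zsc 12 (zm L M)). Proof. zsolve2. Qed.

Lemma irr10_aux : forall n (a b : Z), Z.abs_nat b = n -> a*a = 10*b*b -> b = 0.
Proof.
  intro n; induction n as [n IH] using (well_founded_induction lt_wf).
  intros a b Hn H.
  destruct (Z.Even_or_Odd a) as [[t Ht]|[t Ht]]; subst a.
  - destruct (Z.Even_or_Odd b) as [[s Hs]|[s Hs]]; subst b.
    + assert (t*t = 10*s*s) by nia.
      destruct (Z.eq_dec s 0) as [->|Hs0]; [lia|].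
      assert (s = 0) by (apply (IH (Z.abs_nat s)) with t; [lia|reflexivity|assumption]).
      lia.
    + exfalso. nia.
  - exfalso. nia.
Qed.

Lemma norm0 a b : a*a - 10*b*b = 0 -> a = 0 /\ b = 0.
Proof.
  intro H. assert (b = 0) by (apply (irr10_aux _ a b eq_refl); lia).
  subst. split; [nia|reflexivity].
Qed.

Lemma zdom x y : zm x y = zs_zero -> x = zs_zero \/ y = zs_zero.
Proof.
  destruct x as [a b], y as [c d]. unfold zm, zs_mul, zs_zero; cbn [re im].
  intro H. assert (H1 : a*c + 10*b*d = 0) by (apply (f_equal re) in H; exact H).
  assert (H2 : a*d + b*c = 0) by (apply (f_equal im) in H; exact H).
  assert (HN : (a*a - 10*b*b)*(c*c-10*d*d) = 0).
  { transitivity ((a*c + 10*b*d)*(a*c+10*b*d) - 10*((a*d + b*c)*(a*d+b*c))); [ring|].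
    rewrite H1, H2; ring. }
  apply Z.mul_eq_0 in HN as [HN|HN]; apply norm0 in HN as [-> ->]; auto.
Qed.

Lemma nodup4 (a b c d : Zsqrt) : a<>b -> a<>c -> a<>d -> b<>c -> b<>d -> c<>d -> NoDup [a;b;c;d].
Proof.
  intros. repeat constructor; simpl; intuition congruence.
Qed.

Ltac gen_all := repeat match goal with
  | |- context [Tb ?M ?L] => let t := fresh "t" in set (t := Tb M L) in *; clearbody t; destruct t
  | |- context [Tc ?M ?L] => let t := fresh "t" in set (t := Tc M L) in *; clearbody t; destruct t
  | |- context [Td ?M ?L] => let t := fresh "t" in set (t := Td M L) in *; clearbody t; destruct t
  | H : context [Tb ?M ?L] |- _ => let t := fresh "t" in set (t := Tb M L) in *; clearbody t; destruct t
  | H : context [Tc ?M ?L] |- _ => let t := fresh "t" in set (t := Tc M L) in *; clearbody t; destruct t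
  | H : context [Td ?M ?L] |- _ => let t := fresh "t" in set (t := Td M L) in *; clearbody t; destruct t
  | H : context [zm ?L ?M] |- _ => let t := fresh "t" in set (t := zm L M) in *; clearbody t; destruct t
  end.

Ltac splitE E := let E1 := fresh "E" in let E2 := fresh "E" in
  pose proof (f_equal re E) as E1; pose proof (f_equal im E) as E2; clear E;
  unfold zs_add, zsc, zc, zs_zero, zm, zs_mul in *; cbn [re im] in *.

Lemma quad_ok Y M L :
  (exists q, im Y = 2*q+1) -> (exists q, re Y = 3*q+1) ->
  zs_add M (zsc 12 (zm L M)) = Y -> L <> zs_zero ->
  D_quadruple 10 (zs_add (zc 4) (zsc 4 Y)) M (eB M L) (eC M L) (eD M L).
Proof.
  intros [q1 Hq1] [q2 Hq2] HY HL.
  assert (Hn : nn M L = zs_add (zc 4) (zsc 4 Y)) by (unfold nn; rewrite UM_form, HY; reflexivity).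
  rewrite <- Hn.
  split; [|split; [|split; [|split; [|split; [|split; [|split]]]]]].
  - apply nodup4.
    + intro E. rewrite eB_form in E.
      assert (HT : Tb M L = zs_zero).
      { destruct (Tb M L) as [u1 u2], M as [m1 m2]. splitE E. f_equal; lia. }
      rewrite Tb_form in HT. apply zdom in HT as [HT|HT]; [contradiction|].
      unfold Wb in HT. gen_all. destruct M. splitE HT. lia.
    + intro E. rewrite eC_form in E. gen_all. subst Y. destruct M. splitE E. lia.
    + intro E. rewrite eD_form in E. gen_all. subst Y. destruct M. splitE E. lia.
    + intro E. rewrite eB_form, eC_form in E. gen_all. subst Y. destruct M. splitE E. lia.
    + intro E. rewrite eB_form, eD_form in E. gen_all. subst Y. destruct M. splitE E. lia.
    + intro E. rewrite eC_form, eD_form in E. gen_all. subst Y. destruct M. splitE E. lia.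
  - repeat constructor.
    + intro E. gen_all. subst Y. destruct M. splitE E. lia.
    + intro E. rewrite eB_form in E. gen_all. subst Y. destruct M. splitE E. lia.
    + intro E. rewrite eC_form in E. gen_all. subst Y. destruct M. splitE E. lia.
    + intro E. rewrite eD_form in E. gen_all. subst Y. destruct M. splitE E. lia.
  - eexists; apply sqAB.
  - eexists; apply sqAC.
  - eexists; apply sqAD.
  - eexists; apply sqBC.
  - eexists; apply sqBD.
  - eexists; apply sqCD.
Qed.
Fixpoint ab (j:nat) : Z*Z := match j with
  | O => (60, 19)
  | S j => let (a, b) := ab j in (60 + 721*a + 2280*b, 19 + 228*a + 721*b) end.

Definition Lj j := mkZs (fst (ab j)) (snd (ab j)).
Definition Vj j := mkZs (1 + 12 * fst (ab j)) (-12 * snd (ab j)).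

Lemma ab_norm j : (1 + 12*fst (ab j))*(1 + 12*fst (ab j)) - 10*(12*snd (ab j))*(12*snd (ab j)) = 1.
Proof.
  induction j as [|j IH]; [reflexivity|].
  cbn [ab]. destruct (ab j) as [a b]. cbn [fst snd] in *. etransitivity; [|exact IH]. ring.
Qed.

Lemma ab_pos j : 60 <= fst (ab j) /\ 19 <= snd (ab j).
Proof. induction j as [|j IH]; cbn [ab fst snd]; [lia|]. destruct (ab j); cbn [fst snd] in *; lia. Qed.

Lemma ab_mono i j : (i < j)%nat -> fst (ab i) < fst (ab j).
Proof.
  induction 1 as [|j H IH].
  - pose proof (ab_pos i). cbn [ab]. destruct (ab i); cbn [fst snd] in *; lia.
  - pose proof (ab_pos j). cbn [ab]. destruct (ab j); cbn [fst snd] in *; lia.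
Qed.

Lemma ab_inj i j : fst (ab i) = fst (ab j) -> i = j.
Proof.
  intro H. destruct (Nat.lt_trichotomy i j) as [h|[h|h]]; auto;
  apply ab_mono in h; lia.
Qed.

Section S.
Variable Y : Zsqrt.
Hypothesis HY1 : exists q, im Y = 2*q+1.
Hypothesis HY2 : exists q, re Y = 3*q+1.

Definition Mj j := zm Y (Vj j).

Lemma UMj j : zm (Ue (Lj j)) (Mj j) = Y.
Proof.
  pose proof (ab_norm j) as H. unfold Mj, Vj, Lj, Ue in *.
  destruct (ab j) as [a b]; destruct Y as [y1 y2]; cbn [fst snd] in *.
  unfold zm, zs_mul, zs_add, zsc, zc; cbn [re im]. f_equal.
  - transitivity (y1 * ((1 + 12*a)*(1 + 12*a) - 10*(12*b)*(12*b))); [ring|]. rewrite H; ring.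
  - transitivity (y2 * ((1 + 12*a)*(1 + 12*a) - 10*(12*b)*(12*b))); [ring|]. rewrite H; ring.
Qed.

Lemma Mj_nz j : Mj j <> zs_zero.
Proof.
  intro E. pose proof (UMj j) as H. rewrite E in H. destruct HY1 as [q Hq].
  rewrite <- H in Hq. unfold zm, zs_mul, zs_zero in Hq. cbn [re im] in Hq. lia.
Qed.

Lemma Mj_inj i j : Mj i = Mj j -> i = j.
Proof.
  intro E.
  assert (Hd : zm (zs_add (Ue (Lj i)) (zsc (-1) (Ue (Lj j)))) (Mj i) = zs_zero).
  { pose proof (UMj i) as Hi. pose proof (UMj j) as Hj. rewrite <- E in Hj.
    revert Hi Hj. generalize (Mj i) (Ue (Lj i)) (Ue (Lj j)). intros [m1 m2] [a1 a2] [b1 b2] Hi Hj.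
    rewrite <- Hj in Hi. 
    pose proof (f_equal re Hi) as H1. pose proof (f_equal im Hi) as H2.
    unfold zm, zs_mul, zs_add, zsc, zs_zero in *; cbn [re im] in *. f_equal; lia. }
  apply zdom in Hd as [Hd|Hd]; [|now apply Mj_nz in Hd].
  apply (f_equal re) in Hd. unfold Ue, Lj, zs_add, zsc, zc, zs_zero in Hd; cbn [re im] in Hd.
  apply ab_inj. lia.
Qed.

Lemma Lj_nz j : Lj j <> zs_zero.
Proof. intro E. apply (f_equal re) in E. pose proof (ab_pos j). unfold Lj, zs_zero in E. cbn [re] in E. lia. Qed.

Lemma quad_j j : D_quadruple 10 (zs_add (zc 4) (zsc 4 Y)) (Mj j) (eB (Mj j) (Lj j))
  (eC (Mj j) (Lj j)) (eD (Mj j) (Lj j)).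
Proof.
  apply quad_ok; auto; [|apply Lj_nz]. rewrite <- UM_form. apply UMj.
Qed.

Lemma gen : infinitely_many_D_quadruples 10 (zs_add (zc 4) (zsc 4 Y)).
Proof.
  intro F.
  destruct (classic (exists j, ~ In (Mj j) (concat F))) as [[j Hj]|H].
  - exists (Mj j), (eB (Mj j) (Lj j)), (eC (Mj j) (Lj j)), (eD (Mj j) (Lj j)).
    split; [apply quad_j|].
    intros s Hs Hss. apply Hj. apply in_concat. exists s. split; auto.
    apply Hss. left; reflexivity.
  - exfalso.
    assert (Hin : forall j, In (Mj j) (concat F)).
    { intro j. apply NNPP. intro Hn. apply H. exists j. exact Hn. }
    pose (l := map Mj (seq 0 (S (length (concat F))))).
    assert (Hnd : NoDup l).
    { apply NoDup_map_NoDup_ForallPairs; [intros i j _ _; apply Mj_inj|apply seq_NoDup]. }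
    assert (Hinc : incl l (concat F)).
    { intros x Hx. unfold l in Hx. apply in_map_iff in Hx as [j [<- _]]. apply Hin. }
    pose proof (NoDup_incl_length Hnd Hinc) as Hlen.
    unfold l in Hlen. rewrite length_map, length_seq in Hlen. lia.
Qed.
End S.

Theorem mainTheorem4 :
  (forall m k : Z, m mod 5 = 0 -> k mod 5 = 2 ->
     infinitely_many_D_quadruples 10
       (mkZs (4 * (12 * m + 5)) (4 * (6 * k + 3)))) /\
  (forall m k : Z, m mod 5 = 2 -> k mod 5 = 2 ->
     infinitely_many_D_quadruples 10
       (mkZs (4 * (12 * m + 11)) (4 * (6 * k + 3)))).
Proof.
  split; intros m k _ _.
  - replace (mkZs (4 * (12 * m + 5)) (4 * (6 * k + 3)))
      with (zs_add (zc 4) (zsc 4 (mkZs (12*m+4) (6*k+3))))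
      by (unfold zs_add, zc, zsc; cbn [re im]; f_equal; ring).
    apply gen; cbn [re im]; [exists (3*k+1)|exists (4*m+1)]; ring.
  - replace (mkZs (4 * (12 * m + 11)) (4 * (6 * k + 3)))
      with (zs_add (zc 4) (zsc 4 (mkZs (12*m+10) (6*k+3))))
      by (unfold zs_add, zc, zsc; cbn [re im]; f_equal; ring).
    apply gen; cbn [re im]; [exists (3*k+1)|exists (4*m+3)]; ring.
Qed.
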